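(* Let $T>0$, $\alpha>0$, $\beta>0$, $\sigma>0$, $u_1>0$, let $N$ be a positive integer, and consider the optimal control problem $$\int_0^T\big(\alpha R(t)+\beta u(t)\big)\,dt\to\inf,\qquad \dot R=-uR+N\sigma^2,\qquad R(0)=R_0,\qquad 0\le u(t)\le u_1,$$ with Pontryagin Hamiltonian $H(R,\psi,u)=-(\alpha R+\beta u)+\psi(-uR+N\sigma^2)=H_0(R,\psi)+uH_1(R,\psi)$, where $H_0=-\alpha R+N\sigma^2\psi$ and $H_1=-\beta-R\psi$, and Hamiltonian system $\dot\psi=\alpha+u\psi$, $\dot R=-uR+N\sigma^2$. Suppose $\sqrt{\alpha N\sigma^2/\beta}\le u_1$. Then $$\hat R_s(t)\equiv\sqrt{N\sigma^2\beta/\alpha},\qquad \psi_s(t)\equiv-\sqrt{\alpha\beta/(N\sigma^2)}$$ is a singular extremal of order $1$, and the corresponding singular control is $u_s=\sqrt{\alpha N\sigma^2/\beta}$.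
   Context: An extremal is a solution $(R(t),\psi(t))$ of the Hamiltonian system with $u=u(t)\in[0,u_1]$ satisfying the maximum condition $H(R(t),\psi(t),u(t))=\max_{0\le v\le u_1}H(R(t),\psi(t),v)$. An extremal on an interval $(t_1,t_2)$ is singular if the switching function vanishes identically there: $H_1(R(t),\psi(t))=0$ for all $t\in(t_1,t_2)$. A singular extremal has order $q$ if $\frac{\partial}{\partial u}\frac{d^k}{dt^k}H_1(R,\psi)=0$ for $k=0,\dots,2q-1$ and $\frac{\partial}{\partial u}\frac{d^{2q}}{dt^{2q}}H_1(R,\psi)\ne0$ in a neighbourhood of the trajectory, where time derivatives are computed along the Hamiltonian system. *)

(* Defs.v *)
From HB Require Import structures.
From mathcomp Require Import all_boot all_order all_algebra.
From mathcomp Require Import all_classical all_reals all_analysis.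
Set Implicit Arguments. Unset Strict Implicit. Unset Printing Implicit Defensive.
Import Order.TTheory GRing.Theory Num.Theory.
Import numFieldNormedType.Exports.
Local Open Scope ring_scope.

Section OCP.
Variables (R : realType) (alpha beta sigma u1 : R) (N : nat).

Definition Ham (x p v : R) : R :=
  - (alpha * x + beta * v) + p * (- v * x + N%:R * sigma ^+ 2).
Definition H0 (x p : R) : R := - alpha * x + N%:R * sigma ^+ 2 * p.
Definition H1 (x p : R) : R := - beta - x * p.

Definition fR (x p v : R) : R := - v * x + N%:R * sigma ^+ 2.
Definition fpsi (x p v : R) : R := alpha + v * p.

Definition is_extremal (Rt psi u : R -> R) (t1 t2 : R) : Prop :=
  forall t, t1 < t < t2 ->
    [/\ is_derive t 1 Rt (fR (Rt t) (psi t) (u t)),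
        is_derive t 1 psi (fpsi (Rt t) (psi t) (u t)),
        0 <= u t <= u1 &
        forall v, 0 <= v <= u1 -> Ham (Rt t) (psi t) v <= Ham (Rt t) (psi t) (u t)].

Definition is_singular (Rt psi : R -> R) (t1 t2 : R) : Prop :=
  forall t, t1 < t < t2 -> H1 (Rt t) (psi t) = 0.

(* Total time derivative along the Hamiltonian system of a function
   F(x,p,v) of the state, costate and (frozen) control variable:
   d/dt F = dF/dx * fR + dF/dp * fpsi;  Dt k F is the k-th such derivative. *)
Fixpoint Dt (k : nat) (F : R -> R -> R -> R) : R -> R -> R -> R :=
  match k with
  | 0%N => F
  | k'.+1 => fun x p v =>
      derive1 (fun y => Dt k' F y p v) x * fR x p v
      + derive1 (fun y => Dt k' F x y v) p * fpsi x p v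
  end.

Definition dU (G : R -> R -> R -> R) (x p v : R) : R := derive1 (fun w => G x p w) v.

Definition H1u (x p v : R) : R := H1 x p.

Definition singular_order (Rt psi : R -> R) (t1 t2 : R) (q : nat) : Prop :=
  forall t, t1 < t < t2 ->
    \forall z \near (Rt t, psi t),
      (forall k, (k < 2 * q)%N -> forall v, dU (Dt k H1u) z.1 z.2 v = 0)
      /\ (forall v, dU (Dt (2 * q) H1u) z.1 z.2 v != 0).

End OCP.

(* Main.v *)
Require Import Defs.
From HB Require Import structures.
From mathcomp Require Import all_boot all_order all_algebra.
From mathcomp Require Import all_classical all_reals all_analysis.
From mathcomp Require Import ring lra.
Import Order.TTheory GRing.Theory Num.Theory.
Import numFieldNormedType.Exports.
Local Open Scope ring_scope.
Lemma der_aff (R : realType) (c d x : R) : derive1 (fun y => c + d * y) x = d.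
Proof.
rewrite derive1E; apply: derive_val.
apply: is_derive_eq.
by rewrite add0r mul1r /GRing.scale /= mulr1.
Qed.
Lemma Dt1 (R : realType) (alpha beta sigma : R) N x p v :
  Dt alpha sigma N 1 (H1u beta) x p v = - (N%:R * sigma ^+ 2 * p) - alpha * x.
Proof.
rewrite /= /H1u /H1.
rewrite (_ : (fun y => - beta - y * p) = fun y => - beta + (- p) * y); last first.
  by apply/funext => y; ring.
rewrite (_ : (fun y => - beta - x * y) = fun y => - beta + (- x) * y); last first.
  by apply/funext => y; ring.
rewrite !der_aff /fR /fpsi; ring.
Qed.
Lemma Dt2 (R : realType) (alpha beta sigma : R) N x p v :
  Dt alpha sigma N 2 (H1u beta) x p v =
   - alpha * (- v * x + N%:R * sigma ^+ 2) - N%:R * sigma ^+ 2 * (alpha + v * p).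
Proof.
rewrite [LHS]/=.
rewrite (_ : (fun y => Dt alpha sigma N 1 (H1u beta) y p v) =
   fun y => - (N%:R * sigma ^+ 2 * p) + (- alpha) * y); last first.
  by apply/funext => y; rewrite Dt1; ring.
rewrite (_ : (fun y => Dt alpha sigma N 1 (H1u beta) x y v) =
   fun y => - (alpha * x) + (- (N%:R * sigma ^+ 2)) * y); last first.
  by apply/funext => y; rewrite Dt1; ring.
rewrite !der_aff /fR /fpsi; ring.
Qed.
Lemma near_pos (R : realType) (a b c d : R) : 0 < a * c + b * d ->
  \forall z \near (c, d), 0 < a * z.1 + b * z.2.
Proof.
move=> h.
have hc : ((fun z : R * R => a * z.1 + b * z.2) @ (c, d) --> a * c + b * d)%classic.
  apply: cvgD; apply: cvgMr.
    exact: cvg_fst.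
  exact: cvg_snd.
exact: (cvgr_gt _ hc _ h).
Qed.
Lemma sqrt_prod (R : realType) (X Y k : R) : 0 <= X -> 0 <= k -> X * Y = k ^+ 2 ->
  Num.sqrt X * Num.sqrt Y = k.
Proof.
move=> hX hk h; rewrite -sqrtrM // h sqrtr_sqr ger0_norm //.
Qed.

Theorem lemma2 (R : realType) (T alpha beta sigma u1 : R) (N : nat) :
  0 < T -> 0 < alpha -> 0 < beta -> 0 < sigma -> 0 < u1 -> (0 < N)%N ->
  Num.sqrt (alpha * N%:R * sigma ^+ 2 / beta) <= u1 ->
  let Rs := fun _ : R => Num.sqrt (N%:R * sigma ^+ 2 * beta / alpha) in
  let psis := fun _ : R => - Num.sqrt (alpha * beta / (N%:R * sigma ^+ 2)) in
  let us := fun _ : R => Num.sqrt (alpha * N%:R * sigma ^+ 2 / beta) in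
  is_extremal alpha beta sigma u1 N Rs psis us 0 T /\
  is_singular beta Rs psis 0 T /\
  singular_order alpha beta sigma N Rs psis 0 T 1.
Proof.
move=> hT ha hb hs hu1 hN hle Rs psis us.
set c := N%:R * sigma ^+ 2.
have hc : 0 < c by rewrite /c mulr_gt0 ?ltr0n // exprn_gt0.
set a := Num.sqrt (c * beta / alpha).
set q := Num.sqrt (alpha * beta / c).
set u := Num.sqrt (alpha * N%:R * sigma ^+ 2 / beta).
have ue : u = Num.sqrt (alpha * c / beta) by rewrite /u /c mulrA.
have ua : u * a = c.
  rewrite ue; apply: sqrt_prod; first by apply/ltW/divr_gt0 => //; apply: mulr_gt0.
    exact: ltW.
  by field; rewrite ?gt_eqF.
have uq : u * q = alpha.
  rewrite ue; apply: sqrt_prod; first by apply/ltW/divr_gt0 => //; apply: mulr_gt0.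
    exact: ltW.
  by field; rewrite ?gt_eqF.
have aq : a * q = beta.
  apply: sqrt_prod; first by apply/ltW/divr_gt0 => //; apply: mulr_gt0.
    exact: ltW.
  by field; rewrite ?gt_eqF.
have a0 : 0 < a by rewrite sqrtr_gt0; apply: divr_gt0 => //; apply: mulr_gt0.
have q0 : 0 < q by rewrite sqrtr_gt0; apply: divr_gt0 => //; apply: mulr_gt0.
have u0 : 0 <= u by exact: sqrtr_ge0.
split; last split.
- move=> t ht; rewrite /Rs /psis /us -/c -/a -/q -/u; split.
  + rewrite (_ : fR sigma N a (- q) u = 0); first exact: is_derive_cst.
    by rewrite /fR -/c mulNr ua addNr.
  + rewrite (_ : fpsi alpha a (- q) u = 0); first exact: is_derive_cst.
    by rewrite /fpsi mulrN uq subrr.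
  + by rewrite u0 hle.
  + move=> v _; rewrite /Ham -/c le_eqVlt; apply/orP; left; apply/eqP.
    have : beta = q * a by rewrite mulrC aq.
    move=> ->; ring.
- move=> t ht; rewrite /H1 /Rs /psis -/c -/a -/q mulrN aq; ring.
- move=> t ht; rewrite /Rs /psis -/c -/a -/q.
  have hp : 0 < alpha * a + - c * - q by rewrite mulrNN; apply: addr_gt0; apply: mulr_gt0.
  have := @near_pos R alpha (- c) a (- q) hp.
  apply: filterS => z hz; split.
  + move=> k; rewrite muln1; case: k => [_|[_|//]] v; rewrite /dU.
    * rewrite (_ : (fun w => Dt alpha sigma N 0 (H1u beta) z.1 z.2 w) =
        fun w => H1 beta z.1 z.2 + 0 * w); first exact: der_aff.
      by apply/funext => w; rewrite mul0r addr0.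
    * rewrite (_ : (fun w => Dt alpha sigma N 1 (H1u beta) z.1 z.2 w) =
        fun w => (- (c * z.2) - alpha * z.1) + 0 * w); first exact: der_aff.
      by apply/funext => w; rewrite Dt1 mul0r addr0.
  + move=> v; rewrite /dU muln1.
    rewrite (_ : (fun w => Dt alpha sigma N 2 (H1u beta) z.1 z.2 w) =
        fun w => (- (alpha * c) - c * alpha) + (alpha * z.1 + - c * z.2) * w).
      by rewrite der_aff gt_eqF.
    by apply/funext => w; rewrite Dt2 -/c; ring.
Qed.
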